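(* For every $n\ge1$, the $\{\mathbf{3},\mathbf{2}+\mathbf{2}\}$-free naturally labelled posets on $[n]$ are in bijection with the set $\mathcal B_n$ of bicoloured permutations $\sigma$ of $[n]$ satisfying all of the following: (i) $\sigma(1)$ is blue; (ii) there is no $i$ with $\sigma(i),\sigma(i+1)$ both blue and $\sigma(i)<\sigma(i+1)$; (iii) there is no $i$ with $\sigma(i),\sigma(i+1)$ both red and $\sigma(i)>\sigma(i+1)$; (iv) there are no $i<j$ with $\sigma(i)$ blue, $\sigma(j)$ red and $\sigma(i)>\sigma(j)$.
   Context: A partial order $\preceq$ on $[n]$ is naturally labelled if $x\prec y$ implies $x<y$. It is $\mathbf{3}$-free if there are no $x\prec y\prec z$. It is $(\mathbf{2}+\mathbf{2})$-free if there are no distinct $i\prec j$, $k\prec\ell$ with each of $i,j$ incomparable to each of $k,\ell$. A bicoloured permutation of $[n]$ is a permutation $\sigma$ of $[n]$ in which each entry is coloured either blue or red. *)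

(* Defs.v *)
(* [n] = {1..n} is represented by 'I_n = {0..n-1}
   (order-preserving relabelling i |-> i-1). *)
From mathcomp Require Import all_boot all_fingroup.
Set Implicit Arguments. Unset Strict Implicit. Unset Printing Implicit Defensive.

Section Defs.
Variable n : nat.

Definition prel := {set 'I_n * 'I_n}.

Definition le_R (R : prel) (x y : 'I_n) : bool := (x, y) \in R.
Definition lt_R (R : prel) (x y : 'I_n) : bool := (x != y) && le_R R x y.
Definition incomp_R (R : prel) (x y : 'I_n) : bool := ~~ le_R R x y && ~~ le_R R y x.

Definition is_partial_order (R : prel) : bool :=
  [&& [forall x, le_R R x x],
      [forall x, forall y, le_R R x y && le_R R y x ==> (x == y)] &
      [forall x, forall y, forall z, le_R R x y && le_R R y z ==> le_R R x z]].

Definition naturally_labelled (R : prel) : bool :=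
  [forall x, forall y, lt_R R x y ==> (x < y)%N].

Definition three_free (R : prel) : bool :=
  ~~ [exists x, exists y, exists z, lt_R R x y && lt_R R y z].

Definition two_two_free (R : prel) : bool :=
  ~~ [exists i, exists j, exists k, exists l,
        [&& uniq [:: i; j; k; l], lt_R R i j, lt_R R k l,
            incomp_R R i k, incomp_R R i l, incomp_R R j k & incomp_R R j l]].

Definition good_poset (R : prel) : bool :=
  [&& is_partial_order R, naturally_labelled R, three_free R & two_two_free R].

(* A bicoloured permutation: a permutation s of [n] together with a colouring
   of its entries; the entry s i is blue iff col (s i) = true, red otherwise. *)
Definition bicol_perm := ('S_n * {ffun 'I_n -> bool})%type.

Definition blue (p : bicol_perm) (i : 'I_n) : bool := p.2 (p.1 i).
Definition red (p : bicol_perm) (i : 'I_n) : bool := ~~ blue p i.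
Definition val_at (p : bicol_perm) (i : 'I_n) : nat := nat_of_ord (p.1 i).

Definition in_B (p : bicol_perm) : bool :=
  [&&
      [forall i : 'I_n, (val i == 0%N) ==> blue p i],
      [forall i : 'I_n, forall j : 'I_n,
         [&& val j == (val i).+1, blue p i, blue p j & (val_at p i < val_at p j)%N] == false],
      [forall i : 'I_n, forall j : 'I_n,
         [&& val j == (val i).+1, red p i, red p j & (val_at p i > val_at p j)%N] == false] &
      [forall i : 'I_n, forall j : 'I_n,
         [&& (i < j)%N, blue p i, red p j & (val_at p i > val_at p j)%N] == false]].

End Defs.

(* Main.v *)
Require Import Defs.
From mathcomp Require Import all_boot all_fingroup.
From mathcomp Require Import zify.
Set Implicit Arguments. Unset Strict Implicit. Unset Printing Implicit Defensive.


Section Gen.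
Variable n : nat.
Local Notation T := 'I_n.

Lemma card_notin (A : {set T}) x : x \notin A -> #|A| < n.
Proof.
move=> hx.
have sub : A \subset [set~ x].
  by apply/subsetP => y hy; rewrite !inE; apply: contraNneq hx => <-.
have := subset_leq_card sub; rewrite cardsC1 card_ord => h.
have := ltn_ord x; lia.
Qed.

Definition rk (K : T -> nat) (x : T) := #|[set y | K y < K x]|.
Lemma rk_lt (K : T -> nat) x : rk K x < n.
Proof. by apply: (@card_notin _ x); rewrite inE ltnn. Qed.
Definition rkO K x : T := Ordinal (rk_lt K x).

Lemma rk_mono K x y : (rk K x < rk K y) = (K x < K y).
Proof.
case: (ltnP (K x) (K y)) => h.
  apply: proper_card; apply/properP; split.
    by apply/subsetP => z; rewrite !inE => hz; lia.
  by exists x; rewrite !inE ?ltnn.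
apply/negbTE; rewrite -leqNgt; apply: subset_leq_card; apply/subsetP => z; rewrite !inE => hz; lia.
Qed.

Lemma rkO_inj K : injective K -> injective (rkO K).
Proof.
move=> Kinj x y /(congr1 val) /= e; apply: Kinj.
have h1 := rk_mono K x y; have h2 := rk_mono K y x.
rewrite e ltnn in h1; rewrite e ltnn in h2; lia.
Qed.

Lemma card_ltset (k : nat) : k <= n -> #|[set j : T | j < k]| = k.
Proof.
move=> kn. have -> : [set j : T | j < k] = [set widen_ord kn j | j : 'I_k].
  apply/setP => j; rewrite inE; apply/idP/imsetP => [jk|[j' _ ->]]; last by rewrite /= ltn_ord.
  by exists (Ordinal jk) => //; apply: val_inj.
by rewrite card_imset ?card_ord //; by move=> a b /(congr1 val) /= e; apply: val_inj.
Qed.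

Lemma rk_perm K (q : {perm T}) : (forall x y, (K x < K y) = (q x < q y)) -> forall x, rk K x = q x.
Proof.
move=> h x; rewrite /rk.
have -> : [set y | K y < K x] = q @^-1: [set j : T | j < q x].
  by apply/setP => y; rewrite !inE h.
by rewrite card_preimset ?card_ltset //; [apply: ltnW | apply: perm_inj].
Qed.

Lemma lex a b s t m : s < m -> t < m -> (a * m + s < b * m + t) = (a < b) || (a == b) && (s < t).
Proof.
move=> hs ht; case: (ltngtP a b) => h /=.
- have : a * m + m <= b * m by rewrite -mulSnr leq_mul2r h orbT.
  lia.
- have : b * m + m <= a * m by rewrite -mulSnr leq_mul2r h orbT.
  lia.
- by rewrite h ltn_add2l.
Qed.

Lemma chain (P : pred T) (f : T -> nat) :
  (forall i j : T, (j : nat) = i.+1 -> P i -> P j -> f i < f j) ->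
  forall i j : T, i < j -> (forall k : T, i <= k <= j -> P k) -> f i < f j.
Proof.
move=> step i j ij hP.
have [d hd] : exists d, (j : nat) = i + d.+1 by exists (j - i).-1; lia.
elim: d j ij hP hd => [|d IH] j ij hP hd.
  apply: step => //; try lia; apply: hP; lia.
have hj' : i + d.+1 < n by have := ltn_ord j; lia.
pose j' : T := Ordinal hj'.
apply: (@ltn_trans (f j')).
  apply: IH => //=; [lia | move=> k hk; apply: hP; lia].
apply: step; [rewrite /=; lia | apply: hP; rewrite /=; lia | apply: hP; lia].
Qed.
End Gen.


Section Pos.
Variable n : nat.
Local Notation T := 'I_n.

Definition colR (R : prel n) x := ~~ [exists z, lt_R R z x].
Definition DR (R : prel n) u := [set z | lt_R R z u].
Definition dn R u := #|DR R u|.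
Definition cR R x := if colR R x then n - \max_(u | lt_R R x u) (n - dn R u) else dn R x.
Definition sec (b : bool) (x : T) := if b then n.-1 - x else n + x.
Definition key R x := cR R x * (2 * n) + sec (colR R x) x.

Lemma sec_lt b (x : T) : sec b x < 2 * n.
Proof. have := ltn_ord x; rewrite /sec; case: b; lia. Qed.

Lemma key_lt R x y : (key R x < key R y) =
  (cR R x < cR R y) || (cR R x == cR R y) && (sec (colR R x) x < sec (colR R y) y).
Proof. by rewrite /key lex // sec_lt. Qed.

Lemma key_inj R : injective (key R).
Proof.
move=> x y e.
have h1 := key_lt R x y; have h2 := key_lt R y x.
rewrite e ltnn in h1; rewrite e ltnn in h2.
have hx := ltn_ord x; have hy := ltn_ord y.
apply: val_inj => /=.
move: h1 h2; rewrite /sec; case: (colR R x); case: (colR R y); lia.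
Qed.

Lemma dn_lt R u : dn R u < n.
Proof. by apply: (@card_notin _ _ u); rewrite inE /lt_R eqxx. Qed.

Lemma cR_le R x u : colR R x -> lt_R R x u -> cR R x <= dn R u.
Proof.
move=> cx hu; rewrite /cR cx.
have := @leq_bigmax_cond _ (lt_R R x) (fun u => n - dn R u) u hu.
have := dn_lt R u; lia.
Qed.

Lemma cR_le_n R x : cR R x <= n.
Proof. rewrite /cR; case: colR; [lia | exact: ltnW (dn_lt _ _)]. Qed.

Lemma cR_cases R x : colR R x ->
  (cR R x = n /\ forall u, ~~ lt_R R x u) \/ exists u, lt_R R x u /\ cR R x = dn R u.
Proof.
move=> cx; case: (pickP (lt_R R x)) => [u0 hu0 | none].
  right; case: (@arg_maxnP _ u0 (lt_R R x) (fun u => n - dn R u) hu0) => w hw hmax.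
  exists w; split => //; rewrite /cR cx.
  have -> : \max_(u | lt_R R x u) (n - dn R u) = n - dn R w.
    apply/eqP; rewrite eqn_leq (@leq_bigmax_cond _ (lt_R R x) (fun u => n - dn R u) w hw) andbT.
    by apply/bigmax_leqP.
  have := dn_lt R w; lia.
left; split; last by move=> u; rewrite none.
rewrite /cR cx big_pred0 //; lia.
Qed.

Lemma cR_red R x : ~~ colR R x -> cR R x = dn R x.
Proof. by rewrite /cR => /negbTE ->. Qed.

Section Good.
Variable R : prel n.
Hypothesis good : good_poset R.

Let refl x : le_R R x x.
Proof. by move: good => /and4P[/and3P[/forallP h _ _] _ _ _]. Qed.
Let natl x y : lt_R R x y -> x < y.
Proof. by move: good => /and4P[_ /forallP h _ _] /(implyP (forallP (h x) y)). Qed.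
Let no3 x y z : lt_R R x y -> lt_R R y z -> False.
Proof.
move: good => /and4P[_ _ h _] hxy hyz; move/negP: h; apply.
by apply/existsP; exists x; apply/existsP; exists y; apply/existsP; exists z; rewrite hxy hyz.
Qed.
Let no22 i j k l : uniq [:: i; j; k; l] -> lt_R R i j -> lt_R R k l ->
  incomp_R R i k -> incomp_R R i l -> incomp_R R j k -> incomp_R R j l -> False.
Proof.
move: good => /and4P[_ _ _ h] u a b c d e f; move/negP: h; apply.
apply/existsP; exists i; apply/existsP; exists j; apply/existsP; exists k; apply/existsP; exists l.
by rewrite u a b c d e f.
Qed.

Lemma F1 x y : lt_R R x y -> colR R x && ~~ colR R y.
Proof.
move=> h; apply/andP; split.
  by apply/existsP => -[z hz]; exact: no3 hz h.
by rewrite negbK; apply/existsP; exists x.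
Qed.

Lemma le_lt x y : x != y -> le_R R x y -> lt_R R x y.
Proof. by rewrite /lt_R => -> ->. Qed.

Lemma nested u v : DR R u \subset DR R v \/ DR R v \subset DR R u.
Proof.
case: (boolP (DR R u \subset DR R v)) => [h|/subsetPn [m mu mv]]; first by left.
right; apply/subsetP => m' m'v; apply/negPn/negP => m'u.
move: mu mv m'v m'u; rewrite !inE => mu mv m'v m'u.
have /andP[cm cu] := F1 mu; have /andP[cm' cv] := F1 m'v.
have nle a b : a != b -> ~~ lt_R R a b -> ~~ le_R R a b.
  by move=> ab; apply: contra; apply: le_lt.
have ltcol a b : ~~ colR R b -> ~~ lt_R R b a.
  by move=> cb; apply/negP => /F1 /andP[]; rewrite (negbTE cb).
have ltcol2 a b : colR R b -> ~~ lt_R R a b.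
  by move=> cb; apply/negP => /F1 /andP[_]; rewrite cb.
have neq a b : colR R a -> ~~ colR R b -> a != b.
  by move=> ca cb; apply: contraNneq cb => <-.
have mm' : m != m' by apply: contraNneq m'u => <-.
have uv : u != v by apply: contraNneq mv => <-.
have inc a b : a != b -> ~~ lt_R R a b -> ~~ lt_R R b a -> incomp_R R a b.
  by move=> ab h1 h2; rewrite /incomp_R !nle // eq_sym.
apply: (@no22 m u m' v) => //.
- by rewrite /= !inE !negb_or mm' uv (neq m u) // (neq m v) // (neq m' v) // (eq_sym u m') (neq m' u).
- by apply: inc => //; apply: ltcol2.
- by apply: inc => //; [apply: neq | apply: ltcol].
- by apply: inc => //; [rewrite eq_sym; apply: neq | apply: ltcol].
- by apply: inc => //; apply: ltcol.
Qed.

Lemma dn_proper u v : dn R u < dn R v -> DR R u \proper DR R v.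
Proof.
move=> h; case: (nested u v) => s.
  by rewrite properEcard s.
by move: (subset_leq_card s); rewrite /dn in h; lia.
Qed.

Lemma K1 m u : lt_R R m u -> key R m < key R u.
Proof.
move=> h; have /andP[cm cu] := F1 h.
rewrite key_lt cm (negbTE cu) (cR_red cu) /sec.
have := cR_le cm h; have := ltn_ord m; lia.
Qed.

Lemma K2 x y : colR R x -> ~~ colR R y -> key R x < key R y -> lt_R R x y.
Proof.
move=> cx cy h; apply/negPn/negP => nxy.
rewrite key_lt cx (negbTE cy) (cR_red cy) in h.
have := dn_lt R y.
case: (cR_cases cx) => [[e _] | [u [hu e]]]; rewrite e in h.
  lia.
case: (nested u y) => s.
  by move/subsetP: s => /(_ x); rewrite !inE hu => /(_ isT); rewrite (negbTE nxy).
have: dn R y < dn R u.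
  apply: proper_card; apply/properP; split => //; exists x; by rewrite !inE.
have := ltn_ord x; lia.
Qed.

Lemma le_char x y : le_R R x y = (x == y) || [&& colR R x, ~~ colR R y & key R x < key R y].
Proof.
case: (eqVneq x y) => [<-|nxy] /=; first by rewrite refl.
apply/idP/idP.
  move=> /(le_lt nxy) h; have /andP[-> ->] := F1 h; exact: K1.
by move=> /and3P[cx cy hk]; have := K2 cx cy hk; rewrite /lt_R => /andP[].
Qed.

Lemma natl' x y : lt_R R x y -> x < y.
Proof. exact: natl. Qed.
End Good.

Definition hperm R : 'S_n := perm (@rkO_inj n _ (@key_inj R)).
Definition hmap R : bicol_perm n := ((hperm R)^-1%g, [ffun x => colR R x]).
Definition gmap (p : bicol_perm n) : prel n :=
  [set xy | (xy.1 == xy.2) || [&& p.2 xy.1, ~~ p.2 xy.2 & ((p.1)^-1%g xy.1 < (p.1)^-1%g xy.2)]].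

Lemma hpermE R x : hperm R x = rkO (key R) x.
Proof. by rewrite /hperm permE. Qed.

Lemma hperm_rk R i : rk (key R) ((hperm R)^-1%g i) = i.
Proof. by rewrite -[RHS](congr1 val (permKV (hperm R) i)) hpermE. Qed.

Lemma hmap1 R : (hmap R).1 = (hperm R)^-1%g. Proof. by []. Qed.
Lemma hmap2 R : (hmap R).2 = [ffun x => colR R x]. Proof. by []. Qed.

Lemma rkO_val (K : T -> nat) x : (rkO K x : nat) = rk K x. Proof. by []. Qed.
Lemma leRE (R : prel n) (x y : T) : ((x, y) \in R) = le_R R x y. Proof. by []. Qed.

Lemma gh R : good_poset R -> gmap (hmap R) = R.
Proof.
move=> g; apply/setP => -[x y]; rewrite inE hmap1 hmap2 invgK -[(x, y).1]/x -[(x, y).2]/y !ffunE !hpermE.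
by rewrite !rkO_val rk_mono leRE (le_char g).
Qed.


Lemma between R x y z : rk (key R) y = (rk (key R) x).+1 ->
  key R x < key R z -> key R z < key R y -> False.
Proof. by rewrite -(rk_mono (key R) x z) -(rk_mono (key R) z y) => ->; lia. Qed.


Lemma inB_h R : good_poset R -> in_B (hmap R).
Proof.
move=> g; rewrite /in_B /red /blue /val_at hmap1 hmap2; apply/and4P; split.
- apply/forallP => i; apply/implyP => /eqP i0; have i0' : (i : nat) = 0 := i0; rewrite ffunE.
  have rx := hperm_rk R i; set x := (hperm R)^-1%g i in rx *.
  apply/negP => /existsP [z hz].
  have := @K1 R g _ _ hz; rewrite -(rk_mono (key R)) rx; lia.
- apply/forallP => i; apply/forallP => j; rewrite eqbF_neg !ffunE.
  have rx := hperm_rk R i; set x := (hperm R)^-1%g i in rx *.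
  have ry := hperm_rk R j; set y := (hperm R)^-1%g j in ry *.
  apply/negP => /and4P[/eqP ij bx byy xy].
  have hk : key R x < key R y by rewrite -(rk_mono (key R)) rx ry ij.
  rewrite key_lt bx byy /sec in hk.
  have := ltn_ord y; have := cR_le_n R y.
  case: (cR_cases bx) => [[e _] | [u [hu e]]]; rewrite e in hk.
    lia.
  move=> h1 h2; apply: (@between R x y u); first by rewrite rx ry ij.
    exact: (@K1 R g x u hu).
  have /andP[_ cu] := F1 g hu.
  rewrite key_lt (negbTE cu) byy (cR_red cu); lia.
- apply/forallP => i; apply/forallP => j; rewrite eqbF_neg !ffunE.
  have rx := hperm_rk R i; set x := (hperm R)^-1%g i in rx *.
  have ry := hperm_rk R j; set y := (hperm R)^-1%g j in ry *.
  apply/negP => /and4P[/eqP ij bx byy xy].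
  have hk : key R x < key R y by rewrite -(rk_mono (key R)) rx ry ij.
  rewrite key_lt (negbTE bx) (negbTE byy) (cR_red bx) (cR_red byy) /sec in hk.
  have hd : dn R x < dn R y by lia.
  have /properP [_ [m my mx]] := dn_proper g hd.
  move: my mx; rewrite !inE => my mx.
  have /andP[cm _] := F1 g my.
  apply: (@between R x y m); first by rewrite rx ry ij.
    case: (cR_cases cm) => [[_ h] | [u [hu e]]]; first by move: (h y); rewrite my.
    have /andP[_ cu] := F1 g hu.
    case: (nested g x u) => s.
      have: dn R x < dn R u.
        apply: proper_card; apply/properP; split => //; exists m; by rewrite !inE.
      by rewrite key_lt (negbTE bx) cm (cR_red bx) e => ->.
    by move/subsetP: s => /(_ m); rewrite !inE hu (negbTE mx) => /(_ isT).
  exact: (@K1 R g _ _ my).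
- apply/forallP => i; apply/forallP => j; rewrite eqbF_neg !ffunE.
  have rx := hperm_rk R i; set x := (hperm R)^-1%g i in rx *.
  have ry := hperm_rk R j; set y := (hperm R)^-1%g j in ry *.
  apply/negP => /and4P[ij bx byy xy].
  have hk : key R x < key R y by rewrite -(rk_mono (key R)) rx ry.
  have := natl' g (K2 g bx byy hk); lia.
Qed.
End Pos.


Section Back.
Variable n : nat.
Local Notation T := 'I_n.
Variable q : 'S_n.
Variable col : {ffun T -> bool}.
Hypothesis hp : in_B (q, col).
Local Notation pos := (q^-1)%g.
Local Notation R := (gmap (q, col)).

Lemma qpos x : q (pos x) = x. Proof. by rewrite permKV. Qed.
Lemma posq i : pos (q i) = i. Proof. by rewrite permK. Qed.

Let hi (i : T) : (i : nat) = 0 -> col (q i).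
Proof. by move: hp => /and4P[/forallP h _ _ _] e; move/implyP: (h i); apply; apply/eqP. Qed.
Let hii (i j : T) : (j : nat) = i.+1 -> col (q i) -> col (q j) -> ~~ (q i < q j).
Proof.
move: hp => /and4P[_ /forallP h _ _] e ci cj; move/forallP/(_ j)/eqP: (h i).
rewrite /blue /val_at /= ci cj.
have -> : (val j == (val i).+1) = true by apply/eqP.
by move=> /= ->.
Qed.
Let hiii (i j : T) : (j : nat) = i.+1 -> ~~ col (q i) -> ~~ col (q j) -> ~~ (q j < q i).
Proof.
move: hp => /and4P[_ _ /forallP h _] e ci cj; move/forallP/(_ j)/eqP: (h i).
rewrite /red /blue /val_at /= ci cj.
have -> : (val j == (val i).+1) = true by apply/eqP.
by move=> /= ->.
Qed.
Let hiv (i j : T) : i < j -> col (q i) -> ~~ col (q j) -> ~~ (q j < q i).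
Proof.
move: hp => /and4P[_ _ _ /forallP h] e ci cj; move/forallP/(_ j)/eqP: (h i).
rewrite /red /blue /val_at /= ci cj e.
by move=> /= ->.
Qed.

Lemma ivp a b : col a -> ~~ col b -> pos a < pos b -> a < b.
Proof.
move=> ca cb h; have := hiv h; rewrite !qpos => /(_ ca cb).
have : a != b by apply: contraNneq cb => <-.
move=> /eqP ne; have : (a : nat) <> b by move=> e; apply: ne; apply: val_inj.
lia.
Qed.

Lemma ltg z u : lt_R R z u = [&& col z, ~~ col u & pos z < pos u].
Proof.
rewrite /lt_R /le_R inE /=.
case: (eqVneq z u) => [<-|//]; by case: (col z).
Qed.

Lemma leg z u : le_R R z u = (z == u) || [&& col z, ~~ col u & pos z < pos u].
Proof. by rewrite /le_R inE. Qed.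

Lemma good_g : good_poset R.
Proof.
apply/and4P; split.
- apply/and3P; split.
  + by apply/forallP => x; rewrite leg eqxx.
  + apply/forallP => x; apply/forallP => y; apply/implyP; rewrite !leg.
    case: (eqVneq x y) => //= _ /andP[/and3P[_ cy _] /and3P[cy' _ _]].
    by rewrite cy' in cy.
  + apply/forallP => x; apply/forallP => y; apply/forallP => z; apply/implyP; rewrite !leg.
    move=> /andP[h1 h2].
    case: (eqVneq x y) h1 h2 => [-> _ h2 | nxy /= h1 h2]; first exact: h2.
    case: (eqVneq y z) h1 h2 => [<- h1 _ | nyz /= h1 h2]; first by rewrite h1 orbT.
    by move: h1 h2 => /and3P[_ cy _] /and3P[cy' _ _]; rewrite cy' in cy.
- apply/forallP => x; apply/forallP => y; apply/implyP; rewrite ltg => /and3P[cx cy h].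
  exact: ivp.
- apply/negP => /existsP [x /existsP [y /existsP [z]]]; rewrite !ltg.
  by case/andP => /and3P[_ cy _] /and3P[cy' _ _]; rewrite cy' in cy.
- apply/negP => /existsP [i /existsP [j /existsP [k /existsP [l]]]].
  move=> /and5P[_ hij hkl _ /and3P[hil hjk _]].
  move: hij hkl; rewrite !ltg => /and3P[ci cj pij] /and3P[ck cl pkl].
  move: hil hjk; rewrite /incomp_R !leg ci cj ck cl /= => /andP[/norP[_ hil] _] /andP[_ /norP[_ hkj]].
  lia.
Qed.

Lemma colg x : colR R x = col x.
Proof.
case: (boolP (col x)) => cx.
  by apply/negP => /existsP [z]; rewrite ltg cx andbF.
have n0 : 0 < n by have := ltn_ord x; lia.
pose z : T := q (Ordinal n0).
have cz : col z by apply: hi.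
apply/negbTE; rewrite /colR negbK; apply/existsP; exists z; rewrite ltg cz cx /= /z posq /=.
have : pos x != Ordinal n0.
  by apply: contraNneq cx => e; rewrite -(qpos x) e.
move=> /eqP ne; have : (pos x : nat) <> 0 by move=> e; apply: ne; apply: val_inj.
lia.
Qed.

Definition nb k := #|[set z | col z && (pos z < k)]|.

Lemma dn_nb u : ~~ col u -> dn R u = nb (pos u).
Proof.
move=> cu; rewrite /dn /DR /nb; apply: eq_card => z.
by rewrite !inE ltg cu.
Qed.

Lemma nb_mono k k' : k <= k' -> nb k <= nb k'.
Proof.
move=> h; apply: subset_leq_card; apply/subsetP => z; rewrite !inE => /andP[-> hz] /=; lia.
Qed.

Lemma nb_strict z k k' : col z -> k <= pos z < k' -> nb k < nb k'.
Proof.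
move=> cz /andP[h1 h2]; apply: proper_card; apply/properP; split.
  apply/subsetP => y; rewrite !inE => /andP[-> hy] /=; lia.
by exists z; rewrite !inE cz //= -leqNgt.
Qed.

Lemma runB a b : pos a < pos b -> (forall k : T, pos a <= k <= pos b -> col (q k)) -> b < a.
Proof.
move=> ab hk.
have step : forall i j : T, (j : nat) = i.+1 -> col (q i) -> col (q j) -> n - q i < n - q j.
  move=> i j e ci cj; have := hii e ci cj.
  have : (q i : nat) <> q j.
    move=> e'; have /perm_inj ij : q i = q j by apply: val_inj.
    by rewrite ij in e; lia.
  have := ltn_ord (q i); have := ltn_ord (q j); lia.
have := @chain n (fun k => col (q k)) (fun k => n - q k) step (pos a) (pos b) ab hk.
rewrite !qpos; have := ltn_ord a; have := ltn_ord b; lia.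
Qed.

Lemma runR a b : pos a < pos b -> (forall k : T, pos a <= k <= pos b -> ~~ col (q k)) -> a < b.
Proof.
move=> ab hk.
have step : forall i j : T, (j : nat) = i.+1 -> ~~ col (q i) -> ~~ col (q j) -> q i < q j.
  move=> i j e ci cj; have := hiii e ci cj.
  have : (q i : nat) <> q j.
    move=> e'; have /perm_inj ij : q i = q j by apply: val_inj.
    by rewrite ij in e; lia.
  lia.
have := @chain n (fun k => ~~ col (q k)) (fun k => q k) step (pos a) (pos b) ab hk.
by rewrite !qpos.
Qed.

Lemma key_pos a b : pos a < pos b -> key R a < key R b.
Proof.
move=> ab.
have g := good_g.
case: (boolP (col a)) => ca; case: (boolP (col b)) => cb.
- have ca' : colR R a by rewrite colg.
  have cb' : colR R b by rewrite colg.
  rewrite key_lt ca' cb' /sec.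
  have le_ab : cR R a <= cR R b.
    case: (cR_cases cb') => [[-> _] | [v [hv ->]]]; first exact: cR_le_n.
    apply: cR_le => //; move: hv; rewrite !ltg ca => /and3P[_ -> hv] /=; lia.
  case: (boolP [forall k : T, (pos a <= k <= pos b) ==> col (q k)]) => hall.
    have := runB ab (fun k hk => implyP (forallP hall k) hk).
    have := ltn_ord a; lia.
  move/forallPn: hall => [k]; rewrite negb_imply => /andP[hk cu].
  have pu : pos (q k) = k := posq k.
  have ka : (k : nat) != pos a.
    by apply/eqP => e; have ek : k = pos a := val_inj e; move: cu; rewrite ek qpos ca.
  have kb : (k : nat) != pos b.
    by apply/eqP => e; have ek : k = pos b := val_inj e; move: cu; rewrite ek qpos cb.
  have hau : lt_R R a (q k) by rewrite ltg ca cu pu /=; lia.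
  have h1 := cR_le ca' hau.
  have h2 := dn_nb cu; rewrite pu in h2.
  case: (cR_cases cb') => [[-> _] | [v [hv ->]]].
    have := dn_lt R (q k); lia.
  move: hv; rewrite ltg cb => /and3P[_ cv pv]; rewrite (dn_nb cv).
  have : nb k < nb (pos v) by apply: (@nb_strict b) => //; lia.
  lia.
- by apply: (@K1 _ R g _ _); rewrite ltg ca cb.
- have ca' : ~~ colR R a by rewrite colg.
  have cb' : colR R b by rewrite colg.
  rewrite key_lt (negbTE ca') cb' (cR_red ca') (dn_nb ca) /sec.
  case: (cR_cases cb') => [[-> _] | [v [hv ->]]].
    have := dn_lt R a; rewrite (dn_nb ca); lia.
  move: hv; rewrite ltg cb => /and3P[_ cv pv]; rewrite (dn_nb cv).
  have : nb (pos a) < nb (pos v) by apply: (@nb_strict b) => //; lia.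
  lia.
- have ca' : ~~ colR R a by rewrite colg.
  have cb' : ~~ colR R b by rewrite colg.
  rewrite key_lt (negbTE ca') (negbTE cb') (cR_red ca') (cR_red cb') (dn_nb ca) (dn_nb cb) /sec.
  have := nb_mono (ltnW ab).
  case: (boolP [forall k : T, (pos a <= k <= pos b) ==> ~~ col (q k)]) => hall.
    have := runR ab (fun k hk => implyP (forallP hall k) hk); lia.
  move/forallPn: hall => [k]; rewrite negb_imply negbK => /andP[hk cz].
  have kb : (k : nat) != pos b.
    by apply/eqP => e; have ek : k = pos b := val_inj e; move: cz; rewrite ek qpos (negbTE cb).
  have : nb (pos a) < nb (pos b) by apply: (@nb_strict (q k)) => //; rewrite posq; lia.
  lia.
Qed.

Lemma key_iff a b : (key R a < key R b) = (pos a < pos b).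
Proof.
apply/idP/idP; last exact: key_pos.
move=> h; case: (ltngtP (pos a) (pos b)) => // h'.
  by have := key_pos h'; lia.
have e : a = b by apply: (@perm_inj _ pos); apply: val_inj.
by rewrite e ltnn in h.
Qed.

Lemma hg : hmap R = (q, col).
Proof.
rewrite /hmap; congr (_, _).
  have -> : hperm R = q^-1%g.
    apply/permP => x; apply: val_inj; rewrite hpermE /=.
    by apply: rk_perm => a b; exact: key_iff.
  by rewrite invgK.
by apply/ffunP => x; rewrite ffunE colg.
Qed.

End Back.

Lemma good_g' n (p : bicol_perm n) : in_B p -> good_poset (gmap p).
Proof. by case: p => q c hp; apply: good_g. Qed.

Lemma hg' n (p : bicol_perm n) : in_B p -> hmap (gmap p) = p.
Proof. by case: p => q c hp; apply: hg. Qed.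

Theorem proposition8 (n : nat) (hn : (1 <= n)%N) :
  exists f : {R : prel n | good_poset R} -> {p : bicol_perm n | in_B p},
    bijective f.
Proof.
exists (fun R => exist _ (hmap (sval R)) (inB_h (svalP R))).
exists (fun p => exist _ (gmap (sval p)) (good_g' (svalP p))).
  by move=> [R hR]; apply: val_inj => /=; apply: gh.
by move=> [p hp]; apply: val_inj => /=; apply: hg'.
Qed.
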